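(* Let $(X,d)$ be a metric space with probability measure $\mu$, let $Y$ be a countable set and $f:X\to Y$. Let $\kappa:\mathbb{Z}^+\to\mathbb{Z}^+$ satisfy $\sum_{n=1}^\infty \rho^{\kappa(n)}=\infty$ for every $0<\rho\le 1$. Let $\{z_n\}_{n\ge1}$ be generated by the process $\mathcal{S}(\kappa,\Phi)$ with the distance-to-sample-set heuristic $\Phi(x,S)=d(x,S)=\inf\{d(x,s): s\in S\}$, and let $\zeta_n$ be the nearest neighbor prediction function on $Z_n$. If $x\in\operatorname{supp}(\mu)$ is not an $f$-boundary point, then $\zeta_n(x)\to f(x)$ as $n\to\infty$ with probability one.
   Context: Setting: $(X,d)$ is a metric space equipped with a probability measure $\mu$; $Y$ is a countable set; $f:X\to Y$ is the ''true function''. For $y\in Y$, $X_y=f^{-1}(y)$. $B_\epsilon(x)$ is the open ball of radius $\epsilon$ about $x$. The support $\operatorname{supp}(\mu)$ is the set of $x\in X$ with $\mu(B_\epsilon(x))>0$ for all $\epsilon>0$. A point $b\in X$ is an $f$-boundary point iff $\mu(B_\epsilon(b)\cap(X\setminus X_{f(b)}))>0$ for every $\epsilon>0$. The process $\mathcal{S}(\kappa,\Phi)$, for a function $\kappa:\mathbb{Z}^+\to\mathbb{Z}^+$ and a selection heuristic $\Phi:X\times\mathcal{P}(X)\to\mathbb{R}\cup\{+\infty\}$: set $Z_0=\emptyset$; for $n=1,2,\dots$, draw a set of $\kappa(n)$ candidates independently at random according to $\mu$ (independently of everything before), let $z_n$ be a candidate $s$ maximizing $\Phi(s,Z_{n-1})$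 (ties broken uniformly at random), and set $Z_n=\{z_1,\dots,z_n\}$. Nearest neighbor prediction: $\zeta_n(x)=f(z_\iota)$ where $\iota=\arg\min_{i\le n}d(x,z_i)$, ties broken uniformly at random. *)

(* Defs.v *)
From HB Require Import structures.
From mathcomp Require Import all_boot all_order all_algebra.
From mathcomp Require Import all_classical all_reals all_analysis.
Set Implicit Arguments. Unset Strict Implicit. Unset Printing Implicit Defensive.
Import Order.TTheory GRing.Theory Num.Theory.
Local Open Scope classical_set_scope.
Local Open Scope ring_scope.

Section Defs.
Context {R : realType}.

Definition is_metric {X : Type} (d : X -> X -> R) : Prop :=
  [/\ (forall x y, 0 <= d x y), (forall x y, d x y = 0 <-> x = y),
      (forall x y, d x y = d y x) & (forall x y z, d x z <= d x y + d y z)].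

Definition mball {X : Type} (d : X -> X -> R) (x : X) (e : R) : set X :=
  [set y | d x y < e].

Definition mopen {X : Type} (d : X -> X -> R) (A : set X) : Prop :=
  forall x, A x -> exists2 e : R, 0 < e & mball d x e `<=` A.

Definition in_support {dX} {X : measurableType dX} (d : X -> X -> R)
    (mu : probability X R) (x : X) : Prop :=
  forall e : R, 0 < e -> (0 < mu (mball d x e))%E.

Definition fiber {X Y : Type} (f : X -> Y) (y : Y) : set X := f @^-1` [set y].

Definition f_boundary_point {dX} {X : measurableType dX} {Y : Type}
    (d : X -> X -> R) (mu : probability X R) (f : X -> Y) (b : X) : Prop :=
  forall e : R, 0 < e -> (0 < mu (mball d b e `&` ~` fiber f (f b)))%E.

(* distance-to-sample-set heuristic Phi(x,S) = d(x,S) = inf_{s in S} d(x,s),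
   with inf of the empty set = +oo *)
Definition dist_to_set {X : eqType} (d : X -> X -> R) (x : X) (S : seq X) : \bar R :=
  ereal_inf [set (d x s)%:E | s in [set` S]].

(* Uniform choice among the maximizers of phi on {0,..,k-1}, driven by a
   uniform random number u in [0,1): the floor(u * m)-th maximizer
   (in increasing index order), m = number of maximizers. *)
Definition select_index (phi : nat -> \bar R) (k : nat) (u : R) : nat :=
  let mx := \big[Order.max/-oo%E]_(i <- iota 0 k) phi i in
  let M := [seq i <- iota 0 k | phi i == mx] in
  nth (head 0%N M) M (Num.truncn (u * (size M)%:R)).

(* The process S(kappa, Phi): cand n i (i < kappa n) are the candidates of
   round n >= 1, u n the tie-breaking number of round n.
   sample_seq ... n = Z_n = [:: z_1; ...; z_n]. *)
Fixpoint sample_seq {X : Type} (Phi : X -> seq X -> \bar R) (kappa : nat -> nat)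
    (cand : nat -> nat -> X) (u : nat -> R) (n : nat) : seq X :=
  match n with
  | 0 => [::]
  | m.+1 =>
      let Z := sample_seq Phi kappa cand u m in
      rcons Z (cand m.+1
        (select_index (fun i => Phi (cand m.+1 i) Z) (kappa m.+1) (u m.+1)))
  end.

(* Nearest neighbour prediction zeta(x) on the sample list Z, ties broken
   uniformly using v in [0,1); None if Z is empty. *)
Definition nn_predict {X Y : Type} (d : X -> X -> R) (f : X -> Y) (Z : seq X)
    (v : R) (x : X) : option Y :=
  match Z with
  | [::] => None
  | z0 :: _ =>
      let mn := \big[Order.min/+oo%E]_(z <- Z) (d x z)%:E in
      let I := [seq i <- iota 0 (size Z) | (d x (nth z0 Z i))%:E == mn] in
      let i := nth (head 0%N I) I (Num.truncn (v * (size I)%:R)) in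
      Some (f (nth z0 Z i))
  end.

Definition mutually_independent {dO} {O : measurableType dO} (P : probability O R)
    {I : eqType} (D : set I) (G : I -> set (set O)) : Prop :=
  forall (J : seq I) (E : I -> set O), uniq J ->
    (forall j, j \in J -> D j) -> (forall j, j \in J -> G j (E j)) ->
    fine (P (\bigcap_(j in [set` J]) E j)) = \prod_(j <- J) fine (P (E j)).

Definition preimage_class {dO dT} {O : measurableType dO} {T : measurableType dT}
    (g : O -> T) : set (set O) :=
  [set g @^-1` A | A in measurable].

(* index of the random inputs: candidate (n,i), selection tie-break n,
   prediction tie-break n *)
Definition rand_index := ((nat * nat) + nat + nat)%type.

Definition used_index (kappa : nat -> nat) : set rand_index :=
  fun j => match j with
           | inl (inl (n, i)) => (0 < n)%N /\ (i < kappa n)%N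
           | inl (inr n) => (0 < n)%N
           | inr n => (0 < n)%N
           end.

(* The randomness driving S(kappa, Phi) and the nearest neighbour predictions:
   candidates C n i (n >= 1, i < kappa n) drawn according to mu, uniform
   tie-breaking numbers U n, V n in [0,1), all mutually independent. *)
Definition process_randomness {dX dO} {X : measurableType dX}
    {O : measurableType dO} (P : probability O R) (mu : probability X R)
    (kappa : nat -> nat) (C : nat -> nat -> O -> X) (U V : nat -> O -> R) : Prop :=
  [/\ (forall n i, (0 < n)%N -> (i < kappa n)%N ->
         measurable_fun setT (C n i) /\
         forall A, measurable A -> P (C n i @^-1` A) = mu A),
      (forall n, (0 < n)%N ->
         measurable_fun setT (U n) /\ measurable_fun setT (V n) /\
         (forall A : set R, measurable A ->
            P (U n @^-1` A) = lebesgue_measure (A `&` `[0%R, 1%R[)) /\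
         (forall A : set R, measurable A ->
            P (V n @^-1` A) = lebesgue_measure (A `&` `[0%R, 1%R[))) &
      mutually_independent P (used_index kappa)
        (fun j => match j with
                  | inl (inl (n, i)) => preimage_class (C n i)
                  | inl (inr n) => preimage_class (U n)
                  | inr n => preimage_class (V n)
                  end)].

End Defs.

(* Main.v *)
Require Import Defs.
From HB Require Import structures.
From mathcomp Require Import all_boot all_order all_algebra.
From mathcomp Require Import all_classical all_reals all_analysis.
From mathcomp Require Import ring lra.
Import Order.TTheory GRing.Theory Num.Theory.
Local Open Scope classical_set_scope.
Local Open Scope ring_scope.


Lemma select_index_lt (R : realType) (phi : nat -> \bar R) k (u : R) :
  (0 < k)%N -> (select_index phi k u < k)%N.
Proof.
move=> k0; rewrite /select_index.
set M := [seq i <- iota 0 k | _].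
have HM : forall i, i \in M -> (i < k)%N.
  by move=> i; rewrite mem_filter mem_iota add0n => /andP[_ /andP[]].
case E: M => [|a M'] /=; first by rewrite nth_nil.
apply: HM; rewrite E.
have [lt|ge] := ltnP (Num.truncn (u * (size M').+1%:R)) (size (a :: M')).
  by apply: mem_nth.
by rewrite nth_default // mem_head.
Qed.

Lemma bigmin_attained (R : realType) (T : Type) (F : T -> R) (a : T) (s : seq T) :
  exists2 z, z \in map F (a :: s) & \big[Order.min/+oo%E]_(z <- a :: s) (F z)%:E = (z)%:E.
Proof.
elim: s a => [|b s IH] a /=.
  by exists (F a); rewrite ?mem_head // big_cons big_nil; rewrite minEle leey.
rewrite big_cons.
have [z zin ->] := IH b.
rewrite minEle; case: ifP => _.
  by exists (F a) => //; rewrite mem_head.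
by exists z => //; rewrite inE zin orbT.
Qed.

Lemma bigmin_le_mem (R : realType) (T : eqType) (F : T -> R) (s : seq T) z' :
  z' \in s -> (\big[Order.min/+oo%E]_(z <- s) (F z)%:E <= (F z')%:E)%E.
Proof.
elim: s => [//|a s IH]; rewrite inE big_cons => /orP[/eqP->|/IH h].
  by rewrite minEle; case: ifP => // /negbT; rewrite -ltNge => /ltW.
rewrite minEle; case: ifP => // h2; exact: le_trans h2 h.
Qed.

Lemma pick_mem (I : seq nat) t : I != [::] -> nth (head 0%N I) I t \in I.
Proof.
case: I => [//|a I'] _.
have [lt|ge] := ltnP t (size (a :: I')); first by apply: mem_nth.
by rewrite nth_default // mem_head.
Qed.

Lemma nn_predict_spec (R : realType) (X : eqType) (Y : Type) (d : X -> X -> R)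
   (f : X -> Y) (Z : seq X) (v : R) (x : X) : Z != [::] ->
  exists2 z, z \in Z & nn_predict d f Z v x = Some (f z) /\
     forall z', z' \in Z -> d x z <= d x z'.
Proof.
case: Z => [//|z0 Z'] _; rewrite /nn_predict; cbv beta iota zeta.
set Z := z0 :: Z'.
set mn := \big[_/_]_(z <- _) _.
set I := [seq i <- iota 0 (size Z) | _].
have [m /mapP [zm zmin ->] mnE] := @bigmin_attained _ _ (d x) z0 Z'.
have HI : forall i, i \in I -> (i < size Z)%N /\ (d x (nth z0 Z i))%:E = mn.
  by move=> i; rewrite mem_filter mem_iota add0n => /andP[/eqP -> /andP[]].
have Ine : I != [::].
  apply/negP => /eqP I0.
  have : index zm Z \in I.
    rewrite mem_filter mem_iota add0n index_mem zmin andbT /= nth_index //.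
    by rewrite /mn mnE eqxx.
  by rewrite I0.
have iI := @pick_mem I (Num.truncn (v * (size I)%:R)) Ine.
set i := nth _ I _ in iI *.
have [isz ieq] := HI i iI.
exists (nth z0 Z i); first exact: mem_nth.
split => // z' z'in.
rewrite -lee_fin ieq; exact: bigmin_le_mem.
Qed.

Section Samples.
Variables (R : realType) (X : eqType) (Phi : X -> seq X -> \bar R)
  (kappa : nat -> nat) (cand : nat -> nat -> X) (u : nat -> R).
Hypothesis kpos : forall n, (0 < n)%N -> (0 < kappa n)%N.

Lemma sample_mem n z : z \in sample_seq Phi kappa cand u n ->
  exists k i, [/\ (0 < k)%N, (i < kappa k)%N & z = cand k i].
Proof.
elim: n => [//|n IH] /=; rewrite mem_rcons inE => /orP[/eqP ->|/IH //].
exists n.+1, (select_index (fun i => Phi (cand n.+1 i) (sample_seq Phi kappa cand u n))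
  (kappa n.+1) (u n.+1)); split => //.
by apply: select_index_lt; exact: kpos.
Qed.

Lemma sample_mono n m z : (n <= m)%N -> z \in sample_seq Phi kappa cand u n ->
  z \in sample_seq Phi kappa cand u m.
Proof.
move=> /subnK <-; elim: (m - n)%N => [//|k IH] /IH h /=.
by rewrite /= mem_rcons inE h orbT.
Qed.

Lemma sample_last n : exists2 i, (i < kappa n.+1)%N &
  cand n.+1 i \in sample_seq Phi kappa cand u n.+1.
Proof.
exists (select_index (fun i => Phi (cand n.+1 i) (sample_seq Phi kappa cand u n))
  (kappa n.+1) (u n.+1)); first by apply: select_index_lt; exact: kpos.
by rewrite /= mem_rcons mem_head.
Qed.

Lemma sample_nonempty n : sample_seq Phi kappa cand u n.+1 != [::].
Proof. by rewrite /= -size_eq0 size_rcons. Qed.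

End Samples.

Lemma prod_sum_le1 (R : realType) (a : nat -> R) (s : seq nat) :
  (forall n, 0 <= a n <= 1) ->
  [/\ (\prod_(n <- s) (1 - a n)) * (1 + \sum_(n <- s) a n) <= 1,
      0 <= \prod_(n <- s) (1 - a n) & \prod_(n <- s) (1 - a n) <= 1].
Proof.
move=> ha; elim: s => [|b s [IH1 IH2 IH3]].
  by rewrite !big_nil addr0 mulr1.
rewrite !big_cons.
have /andP[a0 a1] := ha b.
set p := \prod_(n <- s) _ in IH1 IH2 IH3 *.
set S := \sum_(n <- s) _ in IH1 *.
split; [|by rewrite mulr_ge0 // subr_ge0|].
- have e : (1 - a b) * p * (1 + (a b + S)) =
      (1 - a b) * (p * (1 + S)) + (1 - a b) * a b * p by ring.
  rewrite e; have h1 : (1 - a b) * (p * (1 + S)) <= 1 - a b.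
    by rewrite -[leRHS]mulr1 ler_wpM2l // subr_ge0.
  have h2 : (1 - a b) * a b * p <= a b.
    rewrite -mulrA -[leRHS]mul1r; apply: ler_pM; rewrite ?subr_ge0 ?mulr_ge0 //.
      by rewrite lerBlDr lerDl.
    by rewrite -[leRHS]mulr1 ler_wpM2l.
  by have := lerD h1 h2; rewrite subrK.
- by rewrite -[leRHS]mulr1; apply: ler_pM; rewrite ?subr_ge0 // lerBlDr lerDl.
Qed.

Section Indep.
Variables (R : realType) (dO : measure_display) (O : measurableType dO)
  (P : probability O R) (kappa : nat -> nat) (rho : R) (A : nat -> nat -> set O).
Hypothesis mA : forall n i, measurable (A n i).
Definition Iset (J : seq (nat * nat)) := foldr (fun j acc => A j.1 j.2 `&` acc) setT J.
Definition good (j : nat * nat) := (0 < j.1)%N && (j.2 < kappa j.1)%N.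
Hypothesis hyp : forall J, uniq J -> all good J -> P (Iset J) = (rho ^+ size J)%:E.
Definition blk n := [seq (n, i) | i <- iota 0 (kappa n)].
Definition Ev n := Iset (blk n).
Definition Fset (T : seq nat) := foldr (fun n acc => ~` Ev n `&` acc) setT T.

Lemma Iset_cat J1 J2 : Iset (J1 ++ J2) = Iset J1 `&` Iset J2.
Proof. by elim: J1 => [|j J1 IH] /=; rewrite ?setTI // IH setIA. Qed.

Lemma Iset_meas J : measurable (Iset J).
Proof. by elim: J => [|j J IH] /=; [exact: measurableT|exact: measurableI]. Qed.

Lemma Fset_meas T : measurable (Fset T).
Proof.
elim: T => [|n T IH] /=; first exact: measurableT.
by apply: measurableI => //; apply: measurableC; exact: Iset_meas.
Qed.

Lemma Fset_prob T J : uniq T -> all (fun n => 0 < n)%N T -> uniq J -> all good J ->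
  (forall j, j \in J -> j.1 \notin T) ->
  P (Fset T `&` Iset J) = ((\prod_(n <- T) (1 - rho ^+ kappa n)) * rho ^+ size J)%:E.
Proof.
elim: T J => [|n T IH] J uT pT uJ gJ nJ.
  by rewrite big_nil mul1r /= setTI hyp.
move: uT pT => /= /andP[nT uT] /andP[n0 pT].
have setE : Fset (n :: T) `&` Iset J = (Fset T `&` Iset J) `\` Ev n.
  by apply/seteqP; split => w /=; tauto.
have setE2 : (Fset T `&` Iset J) `&` Ev n = Fset T `&` Iset (blk n ++ J).
  by rewrite Iset_cat; apply/seteqP; split => w /=; tauto.
have ublk : uniq (blk n).
  by rewrite map_inj_uniq ?iota_uniq // => i1 i2 [].
have gJ' : all good (blk n ++ J).
  rewrite all_cat gJ andbT; apply/allP => j /mapP [i]; rewrite mem_iota add0n.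
  by move=> /andP[_ ik] ->; rewrite /good /= n0 ik.
have uJ' : uniq (blk n ++ J).
  rewrite cat_uniq ublk uJ andbT /=; apply/hasP => -[j /nJ /= + /mapP [i _ jE]].
  by rewrite jE /= inE eqxx.
have nJ' : forall j, j \in blk n ++ J -> j.1 \notin T.
  move=> j; rewrite mem_cat => /orP[/mapP [i _ ->] //|/nJ].
  by rewrite inE negb_or => /andP[].
rewrite setE measureD ?setE2; first last.
- by rewrite (le_lt_trans (probability_le1 _ _)) ?ltry //; apply: measurableI;
    [exact: Fset_meas|exact: Iset_meas].
- exact: Iset_meas.
- by apply: measurableI; [exact: Fset_meas|exact: Iset_meas].
have nJT : forall j, j \in J -> j.1 \notin T.
  by move=> j /nJ; rewrite inE negb_or => /andP[].
have h1 := IH J uT pT uJ gJ nJT.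
have h2 := IH _ uT pT uJ' gJ' nJ'.
apply: (eq_trans (f_equal2 (fun a b => (a - b)%E) h1 h2)).
rewrite -EFinB size_cat size_map size_iota big_cons exprD; congr EFin; ring.
Qed.

Lemma Iset_mem J w : Iset J w <-> forall j, j \in J -> A j.1 j.2 w.
Proof.
elim: J => [|j J IH] /=; first by split.
split.
  by move=> [h1 /IH h2] k; rewrite inE => /orP[/eqP ->|/h2].
move=> h; split; first by apply: h; rewrite mem_head.
by apply/IH => k kJ; apply: h; rewrite inE kJ orbT.
Qed.

End Indep.

Theorem theorem1 (R : realType) (dX : measure_display) (X : measurableType dX)
    (d : X -> X -> R) (mu : probability X R) (Y : countType) (f : X -> Y)
    (dO : measure_display) (O : measurableType dO) (P : probability O R)
    (kappa : nat -> nat) (C : nat -> nat -> O -> X) (U V : nat -> O -> R)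
    (x : X) :
  is_metric d ->
  @measurable _ X = <<s mopen d >> ->
  (forall y : Y, measurable (fiber f y)) ->
  (forall n, (0 < n)%N -> (0 < kappa n)%N) ->
  (forall rho : R, 0 < rho <= 1 ->
     (\sum_(1 <= n <oo) ((rho ^+ kappa n)%:E) = +oo)%E) ->
  process_randomness P mu kappa C U V ->
  in_support d mu x ->
  ~ f_boundary_point d mu f x ->
  {ae P, forall w : O, exists N : nat, forall n : nat, (N <= n)%N ->
     nn_predict d f
       (sample_seq (dist_to_set d) kappa (fun m i => C m i w) (fun m => U m w) n)
       (V n w) x = Some (f x)}.
Proof.
move=> [d0 dxy dsym dtri] mX mfib kpos hsum [hC hUV hind] xsupp xnb.
have [e e0 me0] : exists2 e : R, 0 < e &
    mu (mball d x e `&` ~` fiber f (f x)) = 0%E.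
  apply: contrapT => hne; apply: xnb => e e0.
  rewrite lt_neqAle measure_ge0 andbT eq_sym; apply/negP => /eqP h.
  by apply: hne; exists e.
have mB : measurable (mball d x e).
  rewrite mX; apply: sub_gen_smallest => z hz.
  exists (e - d x z); first by rewrite subr_gt0.
  move=> w; rewrite /mball /= => hw.
  have := dtri x z w; lra.
have mN : measurable (mball d x e `&` ~` fiber f (f x)).
  by apply: measurableI => //; apply: measurableC.
set rho := fine (mu (mball d x e)).
have muB : mu (mball d x e) = rho%:E by rewrite fineK // fin_num_measure.
have rho0 : 0 < rho by rewrite -lte_fin -muB; exact: xsupp.
have rho1 : rho <= 1 by rewrite -lee_fin -muB; exact: probability_le1.
pose A n i := if (0 < n)%N && (i < kappa n)%N then C n i @^-1` mball d x e
  else setT.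
have mA : forall n i, measurable (A n i).
  move=> n i; rewrite /A; case: ifP => [/andP[n0 ik]|_]; last exact: measurableT.
  have [mf _] := hC n i n0 ik.
  by rewrite -[_ @^-1` _]setTI; exact: mf measurableT _ mB.
have PA : forall n i, good kappa (n, i) -> fine (P (A n i)) = rho.
  move=> n i /andP[/= n0 ik]; rewrite /A n0 ik /=.
  have [_ h] := hC n i n0 ik.
  by rewrite h.
have hypI : forall J, uniq J -> all (good kappa) J ->
    P (Iset dO O A J) = (rho ^+ size J)%:E.
  move=> J uJ gJ.
  pose J' := map (fun j => inl (inl j) : rand_index) J.
  pose Ef := fun j : rand_index => match j with inl (inl (n, i)) => A n i | _ => setT end.
  have := hind J' Ef.
  have -> : \bigcap_(j in [set` J']) Ef j = Iset dO O A J.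
    apply/seteqP; split => w.
      move=> h; apply/Iset_mem => j jJ.
      have := h (inl (inl j)) (map_f _ jJ).
      by case: j {jJ}.
    move=> /Iset_mem h j /= /mapP [[n i] jJ ->] /=.
    exact: (h (n, i) jJ).
  rewrite big_map.
  have -> : \prod_(j <- J) fine (P (Ef (inl (inl j)))) = rho ^+ size J.
    elim: J {uJ J'} gJ => [|j J IH]; first by rewrite big_nil.
    rewrite /= big_cons => /andP[gj gJ]; rewrite IH // exprS; congr (_ * _).
    by case: j gj => n i gj; exact: PA.
  move=> h; rewrite -h.
  - by rewrite fineK // fin_num_measure //; exact: Iset_meas.
  - by rewrite map_inj_uniq // => j1 j2 [].
  - move=> j /mapP [[n i] /(allP gJ) /andP [n0 ik] ->] /=; by split.
  - move=> j /mapP [[n i] /(allP gJ) /andP [n0 ik] ->] /=.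
    by exists (mball d x e) => //; rewrite /A n0 ik.
pose Fall := [set w | forall n, (0 < n)%N -> ~ Ev dO O kappa A n w].
have mFall : measurable Fall.
  have -> : Fall = \bigcap_n (if (0 < n)%N then ~` Ev dO O kappa A n else setT).
    apply/seteqP; split => w /=.
      by move=> h n _; case: ifP => // n0; exact: h.
    by move=> h n n0; have := h n I; rewrite n0.
  apply: bigcapT_measurable => n; case: ifP => _; last exact: measurableT.
  by apply: measurableC; exact: Iset_meas.
have hsub : forall T, all (fun n => 0 < n)%N T -> Fall `<=` Fset dO O kappa A T.
  elim => [|n T IH] /=; first by [].
  by move=> /andP[n0 pT] w hw; split; [exact: hw|exact: IH].
have hN : forall N, (P Fall <=
    (\prod_(n <- index_iota 1 N) (1 - rho ^+ kappa n))%:E)%E.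
  move=> N.
  have pT : all (fun n => 0 < n)%N (index_iota 1 N).
    by apply/allP => n; rewrite mem_index_iota => /andP[].
  have := Fset_prob R dO O P kappa rho A mA hypI (index_iota 1 N) [::]
    (iota_uniq _ _) pT erefl erefl (fun j (h : j \in [::]) => False_ind _ (notF h)).
  rewrite /= setIT expr0 mulr1 => <-.
  apply: le_measure; rewrite ?inE //; [exact: Fset_meas|exact: hsub].
have PFall : P Fall = 0%E.
  apply: contrapT => hne.
  have PF0 : (0 < P Fall)%E by rewrite lt_neqAle measure_ge0 andbT eq_sym; apply/eqP.
  set c := fine (P Fall).
  have PFc : P Fall = c%:E by rewrite fineK // fin_num_measure.
  have c0 : 0 < c by rewrite -lte_fin -PFc.
  have ha : forall n, 0 <= rho ^+ kappa n <= 1.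
    by move=> n; apply/andP; split; [apply: exprn_ge0; exact: ltW|
      apply: exprn_ile1 => //; exact: ltW].
  have hS : forall N, \sum_(1 <= n < N) rho ^+ kappa n <= c^-1.
    move=> N.
    have [h1 _ _] := prod_sum_le1 R (fun n => rho ^+ kappa n) (index_iota 1 N) ha.
    have := hN N; rewrite PFc lee_fin => hc.
    have h2 : c * (1 + \sum_(1 <= n < N) rho ^+ kappa n) <= 1.
      apply: le_trans h1; apply: ler_wpM2r => //.
      by rewrite addr_ge0 // sumr_ge0 // => n _; have /andP[] := ha n.
    rewrite -(ler_pM2l c0) mulfV ?gt_eqF //.
    apply: le_trans h2; rewrite ler_pM2l // lerDr //.
  have := hsum rho; rewrite rho0 rho1 => /(_ isT) hinf.
  have : (\sum_(1 <= n <oo) ((rho ^+ kappa n)%:E) <= (c^-1)%:E)%E.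
    apply: lime_le.
      by apply: is_cvg_nneseries => n _ _; rewrite lee_fin; have /andP[] := ha n.
    by apply: nearW => N; rewrite sumEFin lee_fin.
  by rewrite hinf leNgt ltry.
pose bad k i := [set w | good kappa (k, i) /\
  (mball d x e `&` ~` fiber f (f x)) (C k i w)].
pose Nn := \bigcup_k \bigcup_i bad k i.
have negN : P.-negligible Nn.
  apply: negligible_bigcup => k; apply: negligible_bigcup => i.
  case: (boolP (good kappa (k, i))) => gk.
  - move: (gk) => /andP[/= k0 ik]; have [mf hp] := hC k i k0 ik.
    exists (C k i @^-1` (mball d x e `&` ~` fiber f (f x))); split.
    + have := mf measurableT _ mN; rewrite setTI.
  move=> h; exact: h.
    + have h := hp _ mN.
      by rewrite h me0.
    + by move=> w [].
  - exists set0; split; [exact: measurable0|exact: measure0|].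
    by move=> w [g]; move: gk; rewrite g.
have negF : P.-negligible Fall by exists Fall; split => //; exact: PFall.
apply: negligibleS; last exact: (negligibleU negN negF).
move=> w /= hQ; apply: contrapT => hw; apply: hQ.
have nN : ~ Nn w by move=> h; apply: hw; left.
have [n n0 hEv] : exists2 n, (0 < n)%N & Ev dO O kappa A n w.
  apply: contrapT => hne; apply: hw; right => n n0 hE; apply: hne; by exists n.
case: n n0 hEv => [//|m] _ hEv.
exists m.+1 => n' hn'.
set cand := fun m0 i => C m0 i w.
set Z := sample_seq _ _ _ _ n'.
have Zne : Z != [::].
  rewrite /Z; case: (n') hn' => [//|k] _; exact: sample_nonempty.
have [z zZ [-> zmin]] := @nn_predict_spec _ _ _ d f Z (V n' w) x Zne.
have [i ik ilast] := sample_last R X (dist_to_set d) kappa cand (fun m => U m w) kpos m.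
have iZ : cand m.+1 i \in Z by apply: sample_mono ilast.
have di : d x (cand m.+1 i) < e.
  have := (proj1 (Iset_mem dO O A _ w) hEv) (m.+1, i).
  rewrite /A /= ik /= => /(_ _); apply; apply/mapP; exists i => //.
  by rewrite mem_iota add0n ik.
have dz : d x z < e by apply: le_lt_trans (zmin _ iZ) di.
have [k [i' [k0 i'k zE]]] := sample_mem R X (dist_to_set d) kappa cand (fun m => U m w) kpos _ _ zZ.
rewrite zE in dz *.
congr Some.
apply: contrapT => hf; apply: nN.
exists k => //; exists i' => //; split; first by rewrite /good /= k0.
split; first exact: dz.
move=> hfib; apply: hf; exact: hfib.
Qed.
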